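(* Let $0<\delta<1/1000$, let $x$ be large, let $D=x^{7/12-50\delta}$, let $x^{2\delta} \le N\le x^{1/3+\delta/2}$ and let $d\in\mathcal{D}^+(D)$. Then there is a factorization $d=d_1d_2d_3$ into positive integers such that \begin{align*} d_1&\le\frac{N}{x^\delta},\\ N^2d_2d_3^2&\le x^{1-\delta},\\ N^2d_1d_2^4d_3^3&\le x^{2-\delta},\\ N d_1d_2^5d_3^2&\le x^{2-\delta}. \end{align*}
   Context: For $D\ge 1$, the support set of the upper bound linear sieve weights of level $D$ is \[ \mathcal{D}^+(D):=\Bigl\{p_1\cdots p_r:\ p_1\ge p_2\ge \dots \ge p_r \text{ primes},\ \ p_1\cdots p_{2j}\,p_{2j+1}^3\le D\ \text{ for all } 0\le j<r/2\Bigr\} \] (with $r\ge 0$, the empty product being $1$). *)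

(* Defs.v *)
From Stdlib Require Import Reals.
From mathcomp Require Import all_boot.

Definition prodn (s : seq nat) : nat := foldr muln 1%N s.

(* d lies in the support D^+(D) of the upper bound linear sieve weights of level D:
   d = p_1 ... p_r with p_1 >= ... >= p_r primes and
   p_1 ... p_{2j} p_{2j+1}^3 <= D for all 0 <= j < r/2 (i.e. 2j+1 <= r).
   The list s = [p_1; ...; p_r] (0-indexed: p_{2j+1} = nth 0 s (2j)). *)
Definition in_Dplus (D : R) (d : nat) : Prop :=
  exists s : seq nat,
    all prime s /\ sorted geq s /\ prodn s = d /\
    forall j : nat, (2 * j < size s)%N ->
      Rle (INR (prodn (take (2 * j) s) * (nth 0%N s (2 * j)) ^ 3)) D.

(* Main.v *)
Require Import Defs.
From Stdlib Require Import Reals.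
From mathcomp Require Import all_boot.
Open Scope R_scope.
From Stdlib Require Import Lra ArithRing.

Definition rsum (l : seq R) : R := foldr Rplus 0 l.

Fixpoint sweep (rA rC : R) (l : seq R) : seq nat :=
  match l with
  | [::] => [::]
  | x :: l' => if Rle_dec x rA then 0%N :: sweep (rA - x) rC l'
               else if Rle_dec x rC then 1%N :: sweep rA (rC - x) l'
               else 2%N :: sweep rA rC l'
  end.

Fixpoint selc {T : Type} (k : nat) (cs : seq nat) (s : seq T) : seq T :=
  match cs, s with
  | c :: cs', x :: s' => if eqn c k then x :: selc k cs' s' else selc k cs' s'
  | _, _ => [::]
  end.

Fixpoint selo {T : Type} (cs : seq nat) (s : seq T) : seq T :=
  match cs, s with
  | c :: cs', x :: s' => if eqn c 0 || eqn c 1 then selo cs' s' else x :: selo cs' s'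
  | _, _ => [::]
  end.

Lemma size_sweep rA rC l : size (sweep rA rC l) = size l.
Proof.
elim: l rA rC => [|x l IH] rA rC //=.
by case: Rle_dec => ?; [|case: Rle_dec => ?]; rewrite /= IH.
Qed.

Lemma sweepA_indep l rA rC1 rC2 :
  rsum (selc 0 (sweep rA rC1 l) l) = rsum (selc 0 (sweep rA rC2 l) l).
Proof.
elim: l rA rC1 rC2 => [|x l IH] rA rC1 rC2 //=.
case: Rle_dec => ? /=; first by rewrite (IH _ _ rC2).
case: Rle_dec => ? /=; case: Rle_dec => ? /=; apply: IH.
Qed.

Lemma rsum_cat l1 l2 : rsum (l1 ++ l2) = rsum l1 + rsum l2.
Proof. elim: l1 => [|x l IH] /=; rewrite ?IH; lra. Qed.

Lemma rsum_take_S k l : rsum (take k.+1 l) = rsum (take k l) + nth 0 l k.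
Proof.
elim: l k => [|x l IH] [|k] /=; rewrite ?take0 /=; try lra.
rewrite IH; lra.
Qed.

Lemma tail_lem : forall l Th h rA rC,
  0 <= rA ->
  (forall i, 0 <= nth 0 l i) ->
  (forall k, (k < size l)%N -> rsum (take k l) + 2 * nth 0 l k <= Th) ->
  (forall k, (k < size l)%N -> rsum (take k l) + 3 * nth 0 l k <= Th + h) ->
  let cs := sweep rA rC l in
  let a := rsum (selc 0 cs l) in let c := rsum (selc 1 cs l) in
  let b := rsum (selo cs l) in
  a <= rA /\ (c = 0 \/ c <= rC) /\ 0 <= a /\ 0 <= b /\ 0 <= c /\
  a + b + c = rsum l /\
  ((b = 0 /\ c = 0) \/ rA - a < Th - rsum l) /\
  (b = 0 \/ rC - c < Th - rsum l + h - (rA - a)).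
Proof.
elim=> [|x l IH] Th h rA rC HrA Hnn H1 H2 /=.
  by lra.
have Hx := Hnn 0%N. have H10 := H1 0%N isT. have H20 := H2 0%N isT.
simpl in Hx, H10, H20.
have Hnn' : forall i, 0 <= nth 0 l i by move=> i; exact: (Hnn i.+1).
have H1' : forall k, (k < size l)%N -> rsum (take k l) + 2 * nth 0 l k <= Th - x.
  by move=> k Hk; have := H1 k.+1 Hk; rewrite /=; lra.
have H2' : forall k, (k < size l)%N -> rsum (take k l) + 3 * nth 0 l k <= (Th - x) + h.
  by move=> k Hk; have := H2 k.+1 Hk; rewrite /=; lra.
case: Rle_dec => HA /=.
  have := IH (Th - x) h (rA - x) rC ltac:(lra) Hnn' H1' H2'.
  rewrite /=; lra.
case: Rle_dec => HC /=.
  have := IH (Th - x) h rA (rC - x) HrA Hnn' H1' H2'.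
  rewrite /=; lra.
have := IH (Th - x) h rA rC HrA Hnn' H1' H2'.
rewrite /=; lra.
Qed.

Definition good (Th : R) (l : seq R) : Prop :=
  (forall i, 0 <= nth 0 l i) /\ (forall i, nth 0 l i.+1 <= nth 0 l i) /\
  (forall j, rsum (take (2*j) l) + 3 * nth 0 l (2*j) <= Th).

Lemma good_mono Th l : good Th l -> forall i k, nth 0 l (i + k) <= nth 0 l i.
Proof.
move=> [_ [Hs _]] i; elim=> [|k IH]; first by rewrite addn0; lra.
have := Hs (i + k)%N; rewrite addnS; lra.
Qed.

Lemma good_F1 Th l : good Th l -> forall k, rsum (take k l) + 2 * nth 0 l k <= Th.
Proof.
move=> G k; case: (G) => [Hn [Hs Hv]].
rewrite -[k](odd_double_half k); case: (odd k) => /=.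
- rewrite add1n rsum_take_S -muln2 mulnC.
  have := Hv k./2; have := Hs (2 * k./2)%N; have := Hn (2 * k./2)%N; lra.
- rewrite add0n -muln2 mulnC. have := Hv k./2; have := Hn (2 * k./2)%N; lra.
Qed.

Lemma good_sum Th l : good Th l -> rsum l <= Th.
Proof.
move=> [Hn [Hs Hv]]; have := Hv (size l).
rewrite take_oversize ?nth_default //; try lra.
all: by rewrite -[X in (X <= _)%N]mul1n leq_mul2r leqnSn orbT || (rewrite mulSn; apply: leq_addr).
Qed.

Definition sA rA rC l := rsum (selc 0 (sweep rA rC l) l).
Definition sB rA rC l := rsum (selo (sweep rA rC l) l).
Definition sC rA rC l := rsum (selc 1 (sweep rA rC l) l).

Lemma sweep_step rA rC x l :
  (x <= rA /\ sA rA rC (x :: l) = x + sA (rA - x) rC l /\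
     sB rA rC (x :: l) = sB (rA - x) rC l /\ sC rA rC (x :: l) = sC (rA - x) rC l) \/
  (rA < x /\ x <= rC /\ sA rA rC (x :: l) = sA rA (rC - x) l /\
     sB rA rC (x :: l) = sB rA (rC - x) l /\ sC rA rC (x :: l) = x + sC rA (rC - x) l) \/
  (rA < x /\ rC < x /\ sA rA rC (x :: l) = sA rA rC l /\
     sB rA rC (x :: l) = x + sB rA rC l /\ sC rA rC (x :: l) = sC rA rC l).
Proof.
rewrite /sA /sB /sC /=.
case: Rle_dec => H1 /=; first by left.
case: Rle_dec => H2 /=; right; [left|right]; repeat split; lra.
Qed.

Definition ineqs (d nu a b c : R) : Prop :=
  a <= nu - d /\ 2*nu + b + 2*c <= 1 - d /\ 2*nu + a + 4*b + 3*c <= 2 - d /\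
  nu + a + 5*b + 2*c <= 2 - d.

Lemma main4 d nu t1 t2 t3 t4 tl :
  0 < d < 1/1000 -> 2*d <= nu <= 1/3 + d/2 ->
  good (7/12 - 50*d) [:: t1, t2, t3, t4 & tl] ->
  exists cs, size cs = size [:: t1, t2, t3, t4 & tl] /\
  ineqs d nu (rsum (selc 0 cs [:: t1, t2, t3, t4 & tl])) (rsum (selo cs [:: t1, t2, t3, t4 & tl]))
     (rsum (selc 1 cs [:: t1, t2, t3, t4 & tl])).
Proof.
move=> Hd Hnu G.
set l := [:: t1, t2, t3, t4 & tl].
have F1 := good_F1 _ _ G. have Mo := good_mono _ _ G. have Su := good_sum _ _ G.
case: (G) => [Hn [Hs Hv]].
have n1 := Hn 0%N. have n2 := Hn 1%N. have n3 := Hn 2%N. have n4 := Hn 3%N.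
have n5 := Hn 4%N.
have s1 := Hs 0%N. have s2 := Hs 1%N. have s3 := Hs 2%N. have s4 := Hs 3%N.
have v0 := Hv 0%N. have v1 := Hv 1%N. have v2 := Hv 2%N.
rewrite (_ : (2*2)%N = 4%N) // in v2.
simpl in n1, n2, n3, n4, n5, s1, s2, s3, s4, v0, v1, v2, Su.
rewrite take0 /= in v2.
set t5 := nth 0 tl 0 in n5 s4 v2.
set P4 := t1 + (t2 + (t3 + (t4 + 0))) in v2.
have HP4 : P4 = t1 + (t2 + (t3 + (t4 + 0))) by [].
have Hnn' : forall i, 0 <= nth 0 tl i by move=> i; exact: (Hn i.+4).
have H1' : forall k, (k < size tl)%N -> rsum (take k tl) + 2 * nth 0 tl k <= (7/12 - 50*d - P4).
  by move=> k _; have := F1 k.+4; rewrite /= /P4; lra.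
have H2' : forall k, (k < size tl)%N -> rsum (take k tl) + 3 * nth 0 tl k <= (7/12 - 50*d - P4) + t5.
  move=> k _; have := F1 k.+4; have := Mo 4%N k; rewrite (_ : (4 + k)%N = k.+4) // /= /P4 /t5 /=; lra.
have TL : forall rA rC, 0 <= rA ->
  sA rA rC tl <= rA /\ (sC rA rC tl = 0 \/ sC rA rC tl <= rC) /\ 0 <= sA rA rC tl /\
  0 <= sB rA rC tl /\ 0 <= sC rA rC tl /\
  sA rA rC tl + sB rA rC tl + sC rA rC tl = rsum tl /\
  ((sB rA rC tl = 0 /\ sC rA rC tl = 0) \/ rA - sA rA rC tl < (7/12 - 50*d - P4) - rsum tl) /\
  (sB rA rC tl = 0 \/ rC - sC rA rC tl < (7/12 - 50*d - P4) - rsum tl + t5 - (rA - sA rA rC tl)).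
  by move=> rA rC HrA; exact: (tail_lem tl _ t5 rA rC HrA Hnn' H1' H2').
pose al := nu - d.
pose a0 := sA al 0 l.
pose K := 1 - d - rsum l - 2 * nu + a0.
exists (sweep al K l); split; first by rewrite size_sweep.
change (ineqs d nu (sA al K l) (sB al K l) (sC al K l)).
have Ha0 : a0 = sA al K l by apply: sweepA_indep.
have HK : K = 1 - d - rsum l - 2 * nu + a0 by [].
clearbody a0 K.
have Hal : al = nu - d by [].
clearbody al.
move: Ha0 HK; rewrite /l /ineqs /= in Su *.
do 4 (match goal with |- context [sA ?rA ?rC (?x :: ?l)] =>
  destruct (sweep_step rA rC x l) as [[? [E1 [E2 E3]]]|[[? [? [E1 [E2 E3]]]]|[? [? [E1 [E2 E3]]]]]];
  rewrite ?E1 ?E2 ?E3; clear E1 E2 E3 end);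
match goal with |- context [sA ?rA ?rC tl] =>
  have T := TL rA rC ltac:(lra) end;
move=> Ha0 HK;
repeat match goal with H : _ /\ _ |- _ => destruct H end;
repeat match goal with H : _ \/ _ |- _ => destruct H end;
repeat split; lra.
Qed.

Lemma selc_cat {T : Type} k cs (l1 l2 : seq T) :
  selc k cs (l1 ++ l2) = selc k (take (size l1) cs) l1 ++ selc k (drop (size l1) cs) l2.
Proof.
elim: l1 cs => [|x l1 IH] [|c cs] //=.
by case: eqn; rewrite IH.
Qed.

Lemma selo_cat {T : Type} cs (l1 l2 : seq T) :
  selo cs (l1 ++ l2) = selo (take (size l1) cs) l1 ++ selo (drop (size l1) cs) l2.
Proof.
elim: l1 cs => [|x l1 IH] [|c cs] //=.
by case: (_ || _); rewrite IH.
Qed.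

Lemma rsum_selc0 k cs n : rsum (selc k cs (nseq n 0)) = 0.
Proof.
elim: n cs => [|n IH] [|c cs] //=.
case: eqn => /=; rewrite IH; lra.
Qed.

Lemma rsum_selo0 cs n : rsum (selo cs (nseq n 0)) = 0.
Proof.
elim: n cs => [|n IH] [|c cs] //=.
case: (_ || _) => /=; rewrite IH; lra.
Qed.

Lemma rsum_nseq0 n : rsum (nseq n 0) = 0.
Proof. elim: n => [|n IH] /=; rewrite ?IH; lra. Qed.

Lemma nth_pad l n i : nth 0 (l ++ nseq n 0) i = nth 0 l i.
Proof.
rewrite nth_cat; case: ltnP => H //.
by rewrite nth_nseq nth_default //; case: ifP.
Qed.

Lemma rsum_take_pad l n k : rsum (take k (l ++ nseq n 0)) = rsum (take k l).
Proof.
rewrite take_cat; case: ltnP => H //.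
rewrite rsum_cat (take_oversize H).
have -> : rsum (take (k - size l) (nseq n 0)) = 0.
  by elim: n (k - size l)%N => [|n IH] [|j] //=; rewrite IH; lra.
lra.
Qed.

Lemma good_pad Th l n : good Th l -> good Th (l ++ nseq n 0).
Proof.
move=> [Hn [Hs Hv]]; split; [|split] => *; rewrite ?nth_pad ?rsum_take_pad //.
Qed.

Lemma core_real d nu l :
  0 < d < 1/1000 -> 2*d <= nu <= 1/3 + d/2 -> good (7/12 - 50*d) l ->
  exists cs, size cs = size l /\
  ineqs d nu (rsum (selc 0 cs l)) (rsum (selo cs l)) (rsum (selc 1 cs l)).
Proof.
move=> Hd Hnu G.
have G' := good_pad _ _ 4 G.
have Hsz : (4 <= size (l ++ nseq 4 (0:R)))%N by rewrite size_cat size_nseq leq_addl.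
move: G' Hsz.
case E: (l ++ nseq 4 (0:R)) => [|t1 [|t2 [|t3 [|t4 tl]]]] // G' _.
have [cs [Hcs Hin]] := main4 _ _ _ _ _ _ _ Hd Hnu G'.
exists (take (size l) cs); split.
  rewrite size_take Hcs -E size_cat size_nseq.
  by rewrite (_ : (size l < size l + 4)%N = true) // -{1}(addn0 (size l)) ltn_add2l.
move: Hin; rewrite -E selc_cat selo_cat selc_cat !rsum_cat rsum_selc0 rsum_selo0 rsum_selc0.
by rewrite !Rplus_0_r.
Qed.

Lemma good_of_bounded Th l : 0 <= Th ->
  (forall i, 0 <= nth 0 l i) -> (forall i, nth 0 l i.+1 <= nth 0 l i) ->
  (forall j, (2 * j < size l)%N -> rsum (take (2*j) l) + 3 * nth 0 l (2*j) <= Th) ->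
  good Th l.
Proof.
move=> HT Hn Hs Hv; split; [done|split; [done|]] => j.
case: (ltnP (2 * j) (size l)) => Hj; first exact: Hv.
rewrite take_oversize // nth_default // Rmult_0_r Rplus_0_r.
case E: (size l) => [|n].
  by move/size0nil: E => ->; rewrite /=.
set j0 := n./2.
have Hj0 : (2 * j0 < size l)%N.
  by rewrite E -[n in (_ < n.+1)%N](odd_double_half n) -/j0 mul2n ltnS leq_addl.
have := Hv _ Hj0.
have Hsz : (size l <= (2 * j0).+2)%N.
  rewrite E -[n in (n.+1 <= _)%N](odd_double_half n) -/j0 mul2n ltnS.
  by case: (odd n).
have -> : rsum l = rsum (take (2 * j0).+2 l) by rewrite take_oversize.
rewrite !rsum_take_S.
have := Hs (2 * j0)%N; have := Hn (2 * j0).+1; have := Hn (2 * j0)%N; lra.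
Qed.

Lemma selc_map {T1 T2 : Type} (f : T1 -> T2) k cs s :
  selc k cs (map f s) = map f (selc k cs s).
Proof. elim: s cs => [|x s IH] [|c cs] //=; case: eqn; rewrite /= IH //. Qed.

Lemma selo_map {T1 T2 : Type} (f : T1 -> T2) cs s :
  selo cs (map f s) = map f (selo cs s).
Proof. elim: s cs => [|x s IH] [|c cs] //=; case: (_ || _); rewrite /= IH //. Qed.

Lemma all_selc {T : Type} (P : pred T) k cs s : all P s -> all P (selc k cs s).
Proof. elim: s cs => [|x s IH] [|c cs] //= /andP [Px Ps]; case: eqn; rewrite /= ?Px IH //. Qed.

Lemma all_selo {T : Type} (P : pred T) cs s : all P s -> all P (selo cs s).
Proof. elim: s cs => [|x s IH] [|c cs] //= /andP [Px Ps]; case: (_ || _); rewrite /= ?Px IH //. Qed.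

Lemma prodn_part cs s : (size s <= size cs)%N ->
  prodn s = (prodn (selc 0 cs s) * prodn (selo cs s) * prodn (selc 1 cs s))%N.
Proof.
elim: s cs => [|x s IH] [|c cs] //= Hsz.
rewrite (IH cs Hsz).
case: c => [|[|c]] /=; rewrite -!multE; ring.
Qed.

Lemma prodn_gt0 s : all (fun p => 0 < p)%N s -> (0 < prodn s)%N.
Proof. elim: s => [|x s IH] //= /andP [Hx Hs]; rewrite muln_gt0 Hx IH //. Qed.

Lemma INR_muln m n : INR (m * n)%N = INR m * INR n.
Proof. rewrite -multE; exact: mult_INR. Qed.

Lemma INR_pos n : (0 < n)%N -> 0 < INR n.
Proof. by move=> H; apply: lt_0_INR; apply/ltP. Qed.

Lemma ln_prodn s : all (fun p => 0 < p)%N s ->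
  ln (INR (prodn s)) = rsum (map (fun p => ln (INR p)) s).
Proof.
elim: s => [|x s IH] /= H; first by rewrite ln_1.
move/andP: H => [Hx Hs].
have h1 := INR_pos _ Hx; have h2 := INR_pos _ (prodn_gt0 _ Hs).
by rewrite INR_muln ln_mult // IH.
Qed.

Ltac pos := repeat (match goal with |- 0 < _ * _ => apply Rmult_lt_0_compat | |- 0 < _ ^ _ => apply pow_lt end); try assumption.

Definition Lf (lx : R) (p : nat) : R := ln (INR p) / lx.

Lemma rsum_Lf lx s : rsum (map (Lf lx) s) = rsum (map (fun p => ln (INR p)) s) / lx.
Proof. elim: s => [|x s IH] /=; first by rewrite /Rdiv Rmult_0_l.
by rewrite IH /Lf /Rdiv; ring. Qed.

Lemma ln0 : ln 0 = 0.
Proof. unfold ln; destruct (Rlt_dec 0 0) as [H|H]; [exfalso; lra|reflexivity]. Qed.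

Lemma ln_le' u v : 0 < u -> u <= v -> ln u <= ln v.
Proof.
move=> Hu Huv; case: (Rle_lt_or_eq_dec _ _ Huv) => H.
  by apply: Rlt_le; apply: ln_increasing.
by rewrite H; lra.
Qed.

Lemma le_of_ln u v : 0 < u -> 0 < v -> ln u <= ln v -> u <= v.
Proof.
move=> Hu Hv H; case: (Rle_or_lt u v) => // Hlt.
have := ln_increasing _ _ Hv Hlt; lra.
Qed.

Lemma Lf_ge0 lx p : 0 < lx -> 0 <= Lf lx p.
Proof.
move=> Hl; rewrite /Lf; case: p => [|p]; first by rewrite /= ln0; lra.
have : 0 <= ln (INR p.+1).
  rewrite -ln_1; apply: ln_le'; first lra.
  by rewrite -/(INR 1); apply: le_INR; apply/leP.
move=> H; apply: Rmult_le_pos => //; apply: Rlt_le; apply: Rinv_0_lt_compat => //.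
Qed.

Lemma Lf_mono lx p q : 0 < lx -> (p <= q)%N -> Lf lx p <= Lf lx q.
Proof.
move=> Hl Hpq; case: p Hpq => [|p] Hpq.
  rewrite /Lf /= ln0; have := Lf_ge0 lx q Hl; rewrite /Lf; lra.
rewrite /Lf /Rdiv; apply: Rmult_le_compat_r.
  by apply: Rlt_le; apply: Rinv_0_lt_compat.
apply: ln_le'; first by apply: INR_pos.
by apply: le_INR; apply/leP.
Qed.

Lemma nth_mapL lx s i : nth 0 (map (Lf lx) s) i = Lf lx (nth 0%N s i).
Proof.
case: (ltnP i (size s)) => H; first by rewrite (nth_map 0%N).
by rewrite !nth_default ?size_map // /Lf /= ln0 /Rdiv Rmult_0_l.
Qed.

Theorem proposition9p1 :
  forall delta : R, 0 < delta < 1 / 1000 ->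
  exists x0 : R, forall x : R, x0 <= x ->
  forall N : R, Rpower x (2 * delta) <= N <= Rpower x (1 / 3 + delta / 2) ->
  forall d : nat, in_Dplus (Rpower x (7 / 12 - 50 * delta)) d ->
  exists d1 d2 d3 : nat,
    (0 < d1)%N /\ (0 < d2)%N /\ (0 < d3)%N /\ d = (d1 * d2 * d3)%N /\
    INR d1 <= N / Rpower x delta /\
    N ^ 2 * INR d2 * INR d3 ^ 2 <= Rpower x (1 - delta) /\
    N ^ 2 * INR d1 * INR d2 ^ 4 * INR d3 ^ 3 <= Rpower x (2 - delta) /\
    N * INR d1 * INR d2 ^ 5 * INR d3 ^ 2 <= Rpower x (2 - delta).
Proof.
move=> delta Hdel; exists 2 => x Hx N [HN1 HN2] d [s [Hpr [Hsort [Hprod Hsv]]]].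
have lxpos : 0 < ln x by rewrite -ln_1; apply: ln_increasing; lra.
set lx := ln x in lxpos.
have Rpos : forall y, 0 < Rpower x y by move=> y; rewrite /Rpower; apply: exp_pos.
have Npos : 0 < N by have := Rpos (2 * delta); lra.
pose nu := ln N / lx.
have HlnN : ln N = nu * lx by rewrite /nu; field; lra.
have Hnu : 2 * delta <= nu <= 1/3 + delta/2.
  have h1 := ln_le' _ _ (Rpos _) HN1; have h2 := ln_le' _ _ Npos HN2.
  rewrite !ln_Rpower HlnN -/lx in h1 h2.
  split; [apply: (Rmult_le_reg_r lx) | apply: (Rmult_le_reg_r lx)]; lra.
have Hpos : all (fun p => 0 < p)%N s by apply: sub_all Hpr => p; exact: prime_gt0.
set l := map (Lf lx) s.
have G : good (7/12 - 50 * delta) l.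
  apply: good_of_bounded; first lra.
  - by move=> i; rewrite nth_mapL; apply: Lf_ge0.
  - move=> i; rewrite !nth_mapL; apply: Lf_mono => //.
    case: (ltnP i.+1 (size s)) => H; last by rewrite nth_default.
    have tr : transitive geq by move=> b a c /= h1 h2; exact: leq_trans h2 h1.
    exact: (sorted_ltn_nth tr 0%N Hsort) (ltnW H) H (ltnSn i).
  - move=> j Hj; rewrite size_map in Hj; have := Hsv j Hj.
    rewrite nth_mapL -map_take /Lf rsum_Lf.
    set P := prodn (take (2 * j) s); set q := nth 0%N s (2 * j).
    have Htk : all (fun p => 0 < p)%N (take (2 * j) s).
      by move: Hpos; rewrite -{1}(cat_take_drop (2*j) s) all_cat => /andP [].
    have Ppos : (0 < P)%N by apply: prodn_gt0.
    have qpos : (0 < q)%N by apply: (all_nthP 0%N Hpos).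
    rewrite (_ : (P * q ^ 3)%N = (P * (q * (q * q)))%N); last by rewrite !expnS expn0 muln1.
    move=> H; have := ln_le' _ _ _ H; rewrite ln_Rpower -/lx !INR_muln !ln_mult;
      try (by apply: INR_pos); try (by apply: Rmult_lt_0_compat; apply: INR_pos);
      try (by apply: Rmult_lt_0_compat; [apply: INR_pos|apply: Rmult_lt_0_compat; apply: INR_pos]).
    rewrite ln_prodn //.
    have hP := INR_pos _ Ppos; have hq := INR_pos _ qpos.
    move=> H2; have {}H2 := H2 (Rmult_lt_0_compat _ _ hP (Rmult_lt_0_compat _ _ hq (Rmult_lt_0_compat _ _ hq hq))).
    apply: (Rmult_le_reg_r lx) => //.
    have -> : (rsum (map (fun p => ln (INR p)) (take (2 * j) s)) / lx + 3 * (ln (INR q) / lx)) * lx =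
      rsum (map (fun p => ln (INR p)) (take (2 * j) s)) + 3 * ln (INR q) by field; lra.
    lra.
have [cs [Hsz Hin]] := core_real delta nu l Hdel Hnu G.
have Hsz' : (size s <= size cs)%N by rewrite Hsz size_map.
exists (prodn (selc 0 cs s)), (prodn (selo cs s)), (prodn (selc 1 cs s)).
have pA := all_selc _ 0 cs _ Hpos. have pB := all_selo _ cs _ Hpos.
have pC := all_selc _ 1 cs _ Hpos.
have EL : forall t, all (fun p => 0 < p)%N t -> ln (INR (prodn t)) = rsum (map (Lf lx) t) * lx.
  by move=> t Ht; rewrite rsum_Lf ln_prodn //; field; lra.
rewrite /l selc_map selo_map selc_map in Hin.
move: Hin; rewrite /ineqs.
set a := rsum (map (Lf lx) (selc 0 cs s)).
set b := rsum (map (Lf lx) (selo cs s)).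
set c := rsum (map (Lf lx) (selc 1 cs s)).
move=> [h1 [h2 [h3 h4]]].
have Ea := EL _ pA. have Eb := EL _ pB. have Ec := EL _ pC.
rewrite -/a in Ea. rewrite -/b in Eb. rewrite -/c in Ec.
have gA := prodn_gt0 _ pA. have gB := prodn_gt0 _ pB. have gC := prodn_gt0 _ pC.
have rA := INR_pos _ gA. have rB := INR_pos _ gB. have rC := INR_pos _ gC.
set D1 := prodn (selc 0 cs s) in Ea gA rA *.
set D2 := prodn (selo cs s) in Eb gB rB *.
set D3 := prodn (selc 1 cs s) in Ec gC rC *.
have e2 : INR 2 = 2 by simpl; lra.
have e3 : INR 3 = 3 by simpl; lra.
have e4 : INR 4 = 4 by simpl; lra.
have e5 : INR 5 = 5 by simpl; lra.
have Hl := Rlt_le _ _ lxpos.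
split; [done|split; [done|split; [done|split]]].
  by rewrite -Hprod; apply: prodn_part.
split.
  apply: le_of_ln => //; first by apply: Rdiv_lt_0_compat.
  rewrite /Rdiv ln_mult //; last by apply: Rinv_0_lt_compat.
  rewrite ln_Rinv // ln_Rpower -/lx HlnN Ea.
  have := Rmult_le_compat_r lx _ _ Hl h1; lra.
split.
  apply: le_of_ln => //; first by pos.
  rewrite ln_Rpower -/lx (ln_mult (N^2 * INR D2) (INR D3 ^ 2)); try by pos.
  rewrite (ln_mult (N^2) (INR D2)); try by pos.
  rewrite !ln_pow // HlnN Eb Ec e2.
  have := Rmult_le_compat_r lx _ _ Hl h2; lra.
split.
  apply: le_of_ln => //; first by pos.
  rewrite ln_Rpower -/lx (ln_mult (N^2 * INR D1 * INR D2 ^ 4) (INR D3 ^ 3)); try by pos.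
  rewrite (ln_mult (N^2 * INR D1) (INR D2 ^ 4)); try by pos.
  rewrite (ln_mult (N^2) (INR D1)); try by pos.
  rewrite !ln_pow // HlnN Ea Eb Ec e2 e3 e4.
  have := Rmult_le_compat_r lx _ _ Hl h3; lra.
apply: le_of_ln => //; first by pos.
rewrite ln_Rpower -/lx (ln_mult (N * INR D1 * INR D2 ^ 5) (INR D3 ^ 2)); try by pos.
rewrite (ln_mult (N * INR D1) (INR D2 ^ 5)); try by pos.
rewrite (ln_mult N (INR D1)); try by pos.
rewrite !ln_pow // HlnN Ea Eb Ec e2 e5.
have := Rmult_le_compat_r lx _ _ Hl h4; lra.
Qed.
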